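(* The rules of $\mathbf{LMT}^{\rightarrow}$ are invertible: for each rule, validity of its conclusion implies validity of its premises.
   Context: Formulas are built from atoms using only $\rightarrow$, interpreted in Kripke models $\langle U,\preceq,\mathcal V\rangle$ ($\preceq$ partial order, $\mathcal V$ monotone; $\alpha_1\rightarrow\alpha_2$ forced at $i$ iff for all $j\succeq i$ forcing $\alpha_1$, $\alpha_2$ is forced at $j$). $\Gamma\models\varphi$ means every world of every model forcing all of $\Gamma$ forces $\varphi$. An $\mathbf{LMT}^{\rightarrow}$ sequent has the form $\{\Delta'\},\Upsilon_1^{p_1},\dots,\Upsilon_n^{p_n},\Delta\Rightarrow[p_1,\dots,p_n],\varphi$ with $\Delta,\Upsilon_i$ bags of formulas, $\Upsilon_i^{p_i}$ the formulas of $\Upsilon_i$ labeled by atom $p_i$, $\Delta'\subseteq\Delta$ a set, $p_1,\dots,p_n$ a repetition-free sequence of atoms. Such a sequent is valid iff $\Delta',\Delta\models\varphi$ or there exists $i\in\{1,\dots,n\}$ with $\bigcup_{k=1}^{i}\Upsilon_k^{p_k}\models p_i$ (labels ignored). Write $\overline{\Upsilon}$ for $\Upsilon_1^{p_1},\dots,\Upsilon_n^{p_n}$, $\bar p$ for $p_1,\dots,p_n$, $\Delta^q$ for $\Delta$ labeled by $q$. Rules (with $\Delta'\subseteq\Delta$): Focus: from $\{\Delta',\alpha\},\overline{\Upsilon},\Delta,\alpha\Rightarrow[\bar p],\beta$ infer $\{\Delta'\},\overline{\Upsilon},\Delta,\alpha\Rightarrow[\bar p],\beta$. Restart: from $\{\},\Upsilon_1,\dots,\Upsilon_i,\Upsilon_{i+1}^{p_{i+1}},\dots,\Upsilon_n^{p_n},\Delta^q\Rightarrow[p_1,\dots,p_{i+1},\dots,p_n,q],p_i$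 infer $\{\Delta'\},\Upsilon_1^{p_1},\dots,\Upsilon_n^{p_n},\Delta\Rightarrow[p_1,\dots,p_n],q$. $\rightarrow$-right: from $\{\Delta'\},\overline{\Upsilon},\Delta,\alpha\Rightarrow[\bar p],\beta$ infer $\{\Delta'\},\overline{\Upsilon},\Delta\Rightarrow[\bar p],\alpha\rightarrow\beta$. $\rightarrow$-left: from $\{\alpha\rightarrow\beta,\Delta'\},\overline{\Upsilon},\Delta^q,\Delta\Rightarrow[\bar p,q],\alpha$ and $\{\alpha\rightarrow\beta,\Delta'\},\overline{\Upsilon},\Delta,\beta\Rightarrow[\bar p],q$ infer $\{\alpha\rightarrow\beta,\Delta'\},\overline{\Upsilon},\Delta\Rightarrow[\bar p],q$. The axiom is $\{\Delta',q\},\overline{\Upsilon},\Delta\Rightarrow[\bar p],q$. *)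

(* Defs.v *)
From Stdlib Require Import List.
Import ListNotations.

Inductive form : Type :=
| Atom : nat -> form
| Imp : form -> form -> form.

Record kmodel : Type := {
  kW :> Type;
  kle : kW -> kW -> Prop;
  kle_refl : forall w, kle w w;
  kle_trans : forall u v w, kle u v -> kle v w -> kle u w;
  kle_antisym : forall u v, kle u v -> kle v u -> u = v;
  kval : kW -> nat -> Prop;
  kval_mono : forall u v p, kle u v -> kval u p -> kval v p
}.

Fixpoint forces (M : kmodel) (w : M) (f : form) : Prop :=
  match f with
  | Atom p => kval M w p
  | Imp a b => forall w' : M, kle M w w' -> forces M w' a -> forces M w' b
  end.

Definition entails (G : list form) (phi : form) : Prop :=
  forall (M : kmodel) (w : M), (forall g, In g G -> forces M w g) -> forces M w phi.

(* A sequent {D'}, Y_1^{p_1},...,Y_n^{p_n}, D => [p_1,...,p_n], phi.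
   [sups] is the list of pairs (Y_k, p_k) (bag Y_k with its label p_k),
   so that the label sequence [p_1,...,p_n] is [map snd sups]. Bags are lists. *)
Record sequent : Type := mkSeq {
  sfoc : list form;
  sups : list (list form * nat);
  sctx : list form;
  sgoal : form
}.

Definition labels (s : sequent) : list nat := map snd (sups s).

(* Validity: D', D |= phi, or for some i (0-based here), the union of
   Y_1..Y_{i+1} (labels ignored) entails the atom p_{i+1}. *)
Definition valid (s : sequent) : Prop :=
  entails (sfoc s ++ sctx s) (sgoal s) \/
  exists i, i < length (sups s) /\
    entails (concat (map fst (firstn (S i) (sups s))))
            (Atom (snd (nth i (sups s) ([], 0)))).

(* Each instance
   requires the side condition D' ⊆ D, and that the label sequences of the
   involved sequents be repetition-free (as required of sequents). *)
Inductive lmt_rule : list sequent -> sequent -> Prop :=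
| r_axiom : forall D' U D q,
    incl (Atom q :: D') D -> NoDup (map snd U) ->
    lmt_rule [] (mkSeq (Atom q :: D') U D (Atom q))
| r_focus : forall D' U D a b,
    incl D' D -> NoDup (map snd U) ->
    lmt_rule [mkSeq (a :: D') U (a :: D) b]
             (mkSeq D' U (a :: D) b)
| r_restart : forall D' U D q i,
    incl D' D -> NoDup (map snd U) -> ~ In q (map snd U) ->
    i < length U ->
    lmt_rule [mkSeq [] (U ++ [(D, q)])
                    (concat (map fst (firstn (S i) U)))
                    (Atom (snd (nth i U ([], 0))))]
             (mkSeq D' U D (Atom q))
| r_impR : forall D' U D a b,
    incl D' D -> NoDup (map snd U) ->
    lmt_rule [mkSeq D' U (a :: D) b]
             (mkSeq D' U D (Imp a b))
| r_impL : forall D' U D a b q,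
    incl (Imp a b :: D') D -> NoDup (map snd U) -> ~ In q (map snd U) ->
    lmt_rule [mkSeq (Imp a b :: D') (U ++ [(D, q)]) D a;
              mkSeq (Imp a b :: D') U (b :: D) (Atom q)]
             (mkSeq (Imp a b :: D') U D (Atom q)).

(* Main.v *)
Require Import Defs.
From Stdlib Require Import List Lia.
Import ListNotations.

Lemma ent_weak : forall G G' phi, incl G G' -> entails G phi -> entails G' phi.
Proof. intros G G' phi Hi H M w Hw. apply H. intros g Hg. apply Hw, Hi, Hg. Qed.

Lemma sups_app : forall U X,
  (exists i, i < length U /\
    entails (concat (map fst (firstn (S i) U))) (Atom (snd (nth i U ([], 0))))) ->
  (exists i, i < length (U ++ X) /\
    entails (concat (map fst (firstn (S i) (U ++ X)))) (Atom (snd (nth i (U ++ X) ([], 0))))).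
Proof.
  intros U X [i [Hi H]]. exists i. split.
  - rewrite length_app. lia.
  - rewrite firstn_app. replace (S i - length U) with 0 by lia. simpl.
    rewrite app_nil_r. rewrite app_nth1 by lia. exact H.
Qed.

Lemma sups_last : forall U D q,
  entails (concat (map fst U) ++ D) (Atom q) ->
  (exists i, i < length (U ++ [(D, q)]) /\
    entails (concat (map fst (firstn (S i) (U ++ [(D,q)])))) (Atom (snd (nth i (U ++ [(D,q)]) ([], 0))))).
Proof.
  intros U D q H. exists (length U). split.
  - rewrite length_app. simpl. lia.
  - rewrite firstn_all2 by (rewrite length_app; simpl; lia).
    rewrite app_nth2 by lia. replace (length U - length U) with 0 by lia. simpl.
    rewrite map_app, concat_app. simpl. rewrite app_nil_r. exact H.
Qed.

Theorem lemma3 :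
  forall (prems : list sequent) (concl : sequent),
    lmt_rule prems concl -> valid concl ->
    forall s, In s prems -> valid s.
Proof.
  intros prems concl Hr Hv s Hs.
  destruct Hr; unfold valid in *; simpl in *.
  - destruct Hs.
  - destruct Hs as [<-|[]]; simpl. destruct Hv as [Hv|Hv]; [left|right; exact Hv].
    eapply ent_weak; [|exact Hv]. intros x Hx. simpl. apply in_app_or in Hx.
    right. apply in_or_app. destruct Hx; auto.
  - destruct Hs as [<-|[]]; simpl. right.
    destruct Hv as [Hv|Hv]; [|apply sups_app; exact Hv].
    apply sups_last. eapply ent_weak; [|exact Hv]. intros x Hx.
    apply in_app_or in Hx. apply in_or_app. right. destruct Hx; auto.
  - destruct Hs as [<-|[]]; simpl. destruct Hv as [Hv|Hv]; [left|right; exact Hv].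
    intros M w Hw. simpl in Hv. apply (Hv M w).
    + intros g Hg. apply Hw. apply in_app_or in Hg. apply in_or_app.
      destruct Hg; [left|right; right]; auto.
    + apply kle_refl.
    + apply Hw. apply in_or_app. right. left. reflexivity.
  - destruct Hs as [<-|[<-|[]]]; simpl.
    + right. destruct Hv as [Hv|Hv]; [|apply sups_app; exact Hv].
      apply sups_last. eapply ent_weak; [|exact Hv]. intros x Hx.
      apply in_or_app. right. destruct Hx as [<-|Hx]; [apply H; left; auto|].
      apply in_app_or in Hx. destruct Hx; [apply H; right|]; auto.
    + destruct Hv as [Hv|Hv]; [left|right; exact Hv].
      eapply ent_weak; [|exact Hv]. intros x Hx. simpl in Hx |- *.
      destruct Hx as [Hx|Hx]; [auto|]. right. apply in_app_or in Hx.
      apply in_or_app. destruct Hx; [left|right; right]; auto.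
Qed.
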